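(* If some set maximizing $\widehat{re}$ over nonempty subsets of $\mathbb{S}$ has cardinality $k$, then $\{1,2,\dots,k\}$ also maximizes $\widehat{re}$ over nonempty subsets of $\mathbb{S}$.
   Context: Sellers $\mathbb{S}=\{1,\dots,n\}$ with product qualities $\theta_1\ge\theta_2\ge\dots\ge\theta_n\ge0$. $W$ is the Lambert W function on $[0,\infty)$ ($W(x)e^{W(x)}=x$) and $w_i=W(e^{\theta_i-1})$, so $w_1\ge\dots\ge w_n>0$. For nonempty $S\subseteq\mathbb{S}$, the Cournot-equilibrium revenue when $S$ is displayed is $\widehat{re}(S)=\frac{\sum_{i\in S}(w_i^2+w_i)}{1+\sum_{i\in S}w_i}$. *)

(* Defs.v *)
From Stdlib Require Import Reals Lra List.
Open Scope R_scope.

(* Sellers are indexed 0..n-1 (seller i+1 of the paper is index i).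
   A subset S of sellers is a boolean predicate on nat; only indices < n matter. *)

Definition sumS (n : nat) (S : nat -> bool) (f : nat -> R) : R :=
  fold_right Rplus 0 (map (fun i => if S i then f i else 0) (seq 0 n)).

Definition nonemptyS (n : nat) (S : nat -> bool) : Prop :=
  exists i, (i < n)%nat /\ S i = true.

Definition cardS (n : nat) (S : nat -> bool) : nat :=
  length (filter S (seq 0 n)).

Definition prefixS (k : nat) : nat -> bool := fun i => Nat.ltb i k.

Definition is_LambertW (W : R -> R) : Prop :=
  forall x, 0 <= x -> 0 <= W x /\ W x * exp (W x) = x.

Definition wval (W : R -> R) (theta : nat -> R) (i : nat) : R :=
  W (exp (theta i - 1)).

(* Cournot-equilibrium revenue re^(S) *)
Definition re_hat (W : R -> R) (theta : nat -> R) (n : nat) (S : nat -> bool) : R :=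
  sumS n S (fun i => wval W theta i ^ 2 + wval W theta i)
  / (1 + sumS n S (wval W theta)).

Definition is_maximizer (W : R -> R) (theta : nat -> R) (n : nat) (S : nat -> bool) : Prop :=
  nonemptyS n S /\
  forall T : nat -> bool, nonemptyS n T -> re_hat W theta n T <= re_hat W theta n S.

(* Main.v *)
Require Import Defs.
From Stdlib Require Import Reals Lra Lia List Classical.
Open Scope R_scope.

Definition sn (n : nat) (F : nat -> R) : R := fold_right Rplus 0 (map F (seq 0 n)).

Lemma fold_shift (l : list R) (a : R) : fold_right Rplus a l = fold_right Rplus 0 l + a.
Proof. induction l; simpl; lra. Qed.

Lemma sn_S n F : sn (S n) F = sn n F + F n.
Proof. unfold sn. rewrite seq_S, map_app, fold_right_app. simpl. rewrite fold_shift. lra. Qed.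

Lemma sn_0 F : sn 0 F = 0.
Proof. reflexivity. Qed.

Lemma sn_ext n F G : (forall i, (i < n)%nat -> F i = G i) -> sn n F = sn n G.
Proof. induction n; intros H; [reflexivity|]. rewrite !sn_S, IHn, H; [lra|lia|intros; apply H; lia]. Qed.

Lemma sn_le n F G : (forall i, (i < n)%nat -> F i <= G i) -> sn n F <= sn n G.
Proof. induction n; intros H; [rewrite !sn_0; lra|]. rewrite !sn_S.
  assert (F n <= G n) by (apply H; lia). assert (sn n F <= sn n G) by (apply IHn; intros; apply H; lia). lra. Qed.

Lemma sn_plus n F G : sn n (fun i => F i + G i) = sn n F + sn n G.
Proof. induction n; [rewrite !sn_0; lra|]. rewrite !sn_S, IHn. lra. Qed.

Lemma sn_minus n F G : sn n (fun i => F i - G i) = sn n F - sn n G.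
Proof. induction n; [rewrite !sn_0; lra|]. rewrite !sn_S, IHn. lra. Qed.

Lemma sn_scal n a F : sn n (fun i => a * F i) = a * sn n F.
Proof. induction n; [rewrite !sn_0; lra|]. rewrite !sn_S, IHn. lra. Qed.

Lemma sn_single n i c : (i < n)%nat -> sn n (fun j => if Nat.eqb j i then c else 0) = c.
Proof. induction n; intros H; [lia|]. rewrite sn_S.
  destruct (Nat.eq_dec i n) as [->|Hne].
  - rewrite Nat.eqb_refl. rewrite (sn_ext n _ (fun _ => 0)).
    + assert (sn n (fun _ => 0) = 0) by (induction n; [reflexivity| rewrite sn_S, IHn0; [lra|lia|]]; intros; lia). lra.
    + intros j Hj. destruct (Nat.eqb_spec j n); [lia|reflexivity].
  - rewrite IHn by lia. destruct (Nat.eqb_spec n i); [lia|lra]. Qed.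

Lemma sn_zero n : sn n (fun _ => 0) = 0.
Proof. induction n; [reflexivity|]. rewrite sn_S, IHn. lra. Qed.

Lemma sn_card n (S : nat -> bool) : sn n (fun i => if S i then 1 else 0) = INR (cardS n S).
Proof. unfold cardS. induction n; [reflexivity|]. rewrite sn_S, IHn, seq_S, filter_app, length_app.
  simpl. destruct (S n); simpl; rewrite ?plus_INR; simpl; lra. Qed.

Lemma card_prefix n k : cardS n (prefixS k) = Nat.min k n.
Proof. unfold cardS. induction n; [simpl; lia|]. rewrite seq_S, filter_app, length_app, IHn.
  simpl. unfold prefixS. destruct (Nat.ltb_spec n k); simpl; lia. Qed.

Lemma card_le n S : (cardS n S <= n)%nat.
Proof. unfold cardS. rewrite <- (length_seq n 0) at 2. apply filter_length_le. Qed.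

Lemma card_pos n (S : nat -> bool) i : (i < n)%nat -> S i = true -> (1 <= cardS n S)%nat.
Proof. intros Hi HS. unfold cardS.
  assert (In i (filter S (seq 0 n))) by (apply filter_In; split; [apply in_seq; lia|auto]).
  destruct (filter S (seq 0 n)); simpl in *; [contradiction|lia]. Qed.

Lemma W_mono W (hW : is_LambertW W) x y : 0 <= x -> x <= y -> W x <= W y.
Proof. intros Hx Hxy. destruct (hW x Hx) as [H1 H2]. destruct (hW y ltac:(lra)) as [H3 H4].
  destruct (Rle_lt_dec (W x) (W y)) as [|Hlt]; auto.
  assert (exp (W y) < exp (W x)) by (apply exp_increasing; auto).
  assert (0 < exp (W y)) by apply exp_pos.
  assert (W y * exp (W y) < W x * exp (W x)) by nra. lra. Qed.

Lemma W_pos W (hW : is_LambertW W) x : 0 < x -> 0 < W x.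
Proof. intros Hx. destruct (hW x ltac:(lra)) as [H1 H2].
  destruct H1 as [|H0]; auto. rewrite <- H0 in H2. lra. Qed.

Lemma div_le_l a b c : 0 < b -> a / b <= c -> a <= c * b.
Proof. intros Hb H. replace a with ((a / b) * b) by (field; lra). apply Rmult_le_compat_r; lra. Qed.

Lemma div_le_r a b c : 0 < b -> c * b <= a -> c <= a / b.
Proof. intros Hb H. replace c with ((c * b) / b) by (field; lra). unfold Rdiv. apply Rmult_le_compat_r; [left; apply Rinv_0_lt_compat; lra|lra]. Qed.

Theorem lemma8 (n : nat) (theta : nat -> R) (W : R -> R)
  (hW : is_LambertW W)
  (hmono : forall i j, (i <= j)%nat -> (j < n)%nat -> theta j <= theta i)
  (hnonneg : forall i, (i < n)%nat -> 0 <= theta i)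
  (S : nat -> bool) (k : nat)
  (hS : is_maximizer W theta n S) (hk : cardS n S = k) :
  is_maximizer W theta n (prefixS k).
Proof.
  set (ww := wval W theta).
  assert (wpos : forall i, 0 < ww i) by (intros; apply W_pos; auto; apply exp_pos).
  assert (wmono : forall i j, (j <= i)%nat -> (i < n)%nat -> ww i <= ww j).
  { intros i j Hij Hi. unfold ww, wval. apply W_mono; auto. left; apply exp_pos.
    assert (theta i <= theta j) by (apply hmono; auto).
    destruct (Req_dec (theta i) (theta j)) as [->|]; [lra|]. left; apply exp_increasing; lra. }
  set (r := re_hat W theta n S).
  set (hh := fun i => ww i ^ 2 + ww i - r * ww i).
  assert (Bnn : forall T : nat -> bool, 0 <= sumS n T ww).
  { intros T. change (0 <= sn n (fun i => if T i then ww i else 0)). rewrite <- (sn_zero n) at 1.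
    apply sn_le. intros i _. cbv beta. destruct (T i); [left; apply wpos|lra]. }
  assert (Ann : forall T : nat -> bool, 0 <= sumS n T (fun i => ww i ^ 2 + ww i)).
  { intros T. change (0 <= sn n (fun i => if T i then ww i ^ 2 + ww i else 0)). rewrite <- (sn_zero n) at 1.
    apply sn_le. intros i _. specialize (wpos i). destruct (T i); nra. }
  assert (Hhh : forall T : nat -> bool, sn n (fun i => if T i then hh i else 0)
      = sumS n T (fun i => ww i ^ 2 + ww i) - r * sumS n T ww).
  { intros T. unfold sumS. fold (sn n (fun i => if T i then ww i ^ 2 + ww i else 0)).
    fold (sn n (fun i => if T i then ww i else 0)). rewrite <- sn_scal, <- sn_minus.
    apply sn_ext. intros i _. unfold hh. destruct (T i); ring. }
  assert (rnn : 0 <= r).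
  { unfold r, re_hat. specialize (Bnn S). specialize (Ann S). fold ww.
    apply Rmult_le_pos; auto. left; apply Rinv_0_lt_compat; lra. }
  destruct hS as [HSne HSmax].
  assert (keyT : forall T : nat -> bool, sn n (fun i => if T i then hh i else 0) <= r).
  { intros T. destruct (classic (nonemptyS n T)) as [HT|HT].
    - specialize (HSmax T HT). rewrite Hhh. fold r in HSmax. unfold re_hat in HSmax. fold ww in HSmax.
      specialize (Bnn T). apply div_le_l in HSmax; [|lra]. lra.
    - rewrite (sn_ext n _ (fun _ => 0)); [rewrite sn_zero; lra|].
      intros i Hi. destruct (T i) eqn:E; [|reflexivity]. exfalso; apply HT; exists i; auto. }
  assert (keyS : sn n (fun i => if S i then hh i else 0) = r).
  { rewrite Hhh. unfold r, re_hat. fold ww. specialize (Bnn S). field. lra. }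
  assert (hpos : forall i, (i < n)%nat -> S i = true -> 0 <= hh i).
  { intros i Hi Si. specialize (keyT (fun j => andb (S j) (negb (Nat.eqb j i)))).
    assert (E : sn n (fun j => if S j then hh j else 0) - sn n (fun j => if (andb (S j) (negb (Nat.eqb j i)))%bool then hh j else 0)
      = hh i).
    { rewrite <- sn_minus. rewrite <- (sn_single n i (hh i) Hi). apply sn_ext. intros j _.
      destruct (Nat.eqb_spec j i) as [->|]; rewrite ?Si; simpl; [lra|]. destruct (S j); simpl; lra. }
    lra. }
  assert (hmon : forall x y, 0 < x -> x <= y -> r - 1 <= x ->
      x ^ 2 + x - r * x <= y ^ 2 + y - r * y) by (intros; nra).
  assert (wlow : forall i, (i < n)%nat -> S i = true -> r - 1 <= ww i).
  { intros i Hi Si. specialize (hpos i Hi Si). unfold hh in hpos. specialize (wpos i). nra. }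
  destruct HSne as [i0 [Hi0 Si0]].
  assert (k1 : (1 <= k)%nat) by (subst k; eapply card_pos; eauto).
  assert (kn : (k <= n)%nat) by (subst k; apply card_le).
  assert (main : r <= sn n (fun i => if prefixS k i then hh i else 0)).
  { assert (Hc : exists c, forall i, (i < n)%nat ->
        0 <= ((if prefixS k i then 1 else 0) - (if S i then 1 else 0)) * (hh i - c)).
    { destruct (classic (exists i, (i < n)%nat /\ S i = true /\ (k <= i)%nat)) as [[i1 [Hi1 [Si1 Hki1]]]|HB].
      - exists (hh (k - 1)%nat). intros i Hi. unfold prefixS. destruct (Nat.ltb_spec i k).
        + destruct (S i) eqn:Si; [lra|]. assert (ww (k-1)%nat <= ww i) by (apply wmono; lia).
          assert (ww i1 <= ww (k-1)%nat) by (apply wmono; lia). specialize (wlow i1 Hi1 Si1).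
          specialize (hmon (ww (k-1)%nat) (ww i) (wpos _)). unfold hh. nra.
        + destruct (S i) eqn:Si; [|lra]. assert (ww i <= ww (k-1)%nat) by (apply wmono; lia).
          specialize (wlow i Hi Si). specialize (hmon (ww i) (ww (k-1)%nat) (wpos _)). unfold hh. nra.
      - exists (- sn n (fun i => Rabs (hh i))). intros i Hi.
        assert (Hge : Rabs (hh i) <= sn n (fun i => Rabs (hh i))).
        { rewrite <- (sn_single n i (Rabs (hh i)) Hi). apply sn_le. intros j _.
          destruct (Nat.eqb_spec j i) as [->|]; [lra|apply Rabs_pos]. }
        assert (-Rabs (hh i) <= hh i) by (pose proof (Rle_abs (- hh i)); rewrite Rabs_Ropp in *; lra).
        unfold prefixS. destruct (Nat.ltb_spec i k).
        + destruct (S i); lra.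
        + destruct (S i) eqn:Si; [|lra]. exfalso; apply HB; exists i; auto. }
    destruct Hc as [c Hc].
    assert (H0 := sn_le n (fun _ => 0) _ Hc). rewrite sn_zero in H0.
    assert (Eq : sn n (fun i => ((if prefixS k i then 1 else 0) - (if S i then 1 else 0)) * (hh i - c))
       = sn n (fun i => if prefixS k i then hh i else 0) - sn n (fun i => if S i then hh i else 0)
         - c * (sn n (fun i => if prefixS k i then 1 else 0) - sn n (fun i => if S i then 1 else 0))).
    { rewrite <- !sn_minus, <- sn_scal, <- sn_minus. apply sn_ext. intros i _.
      destruct (prefixS k i), (S i); ring. }
    rewrite !sn_card, card_prefix, hk in Eq. rewrite Nat.min_l in Eq by lia. lra. }
  split.
  - exists 0%nat. split; [lia|]. unfold prefixS. apply Nat.ltb_lt. lia.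
  - intros T HT. apply Rle_trans with r; [apply HSmax; auto|].
    rewrite Hhh in main. unfold re_hat. fold ww. specialize (Bnn (prefixS k)).
    apply div_le_r; lra.
Qed.
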